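(* Let $n\ge1$, let $\mathcal S$ be a subset of $\{E_{ij}:1\le i,j\le n\}$ and $A\in\mathfrak{gl}(n)$. Let $\mathcal G_{\mathcal S}$ be the digraph on $\{1,\dots,n\}$ with arc $(i,j)$ iff $E_{ij}\in\mathcal S$, and $\mathcal G_A$ the digraph on $\{1,\dots,n\}$ with arc $(i,j)$ iff $A_{ij}\ne0$ (arcs $(i,i)$ being self-loops). Suppose (i) each weakly connected component of $\mathcal G_{\mathcal S}$ is strongly connected with at least two nodes; (ii) $\mathcal G_{\mathcal S}$ has at least one self-loop; (iii) the union digraph $\mathcal G_A\cup\mathcal G_{\mathcal S}$ is strongly connected. Then the real Lie algebra generated by $\{A\}\cup\mathcal S$ equals $\mathfrak{gl}(n)$.
   Context: $E_{ij}$ is the $n\times n$ matrix with $(i,j)$ entry $1$ and others $0$; $\mathfrak{gl}(n)$ is the Lie algebra of real $n\times n$ matrices with bracket $[X,Y]=XY-YX$. A weakly connected component of a digraph is a connected component when directions are ignored; strongly connected means all pairs of nodes are mutually reachable via directed paths; the union digraph has the union of arc sets. *)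

(* Defs.v *)
From HB Require Import structures.
From mathcomp Require Import all_boot all_order all_algebra.
From mathcomp Require Export reals.
Set Implicit Arguments. Unset Strict Implicit. Unset Printing Implicit Defensive.
Import GRing.Theory Num.Theory.
Local Open Scope ring_scope.

Definition lie_bracket (R : ringType) (n : nat) (X Y : 'M[R]_n) : 'M[R]_n :=
  X *m Y - Y *m X.

Definition lie_subalgebra (R : ringType) (n : nat) (L : 'M[R]_n -> Prop) : Prop :=
  [/\ L 0,
      (forall X Y, L X -> L Y -> L (X + Y)),
      (forall (c : R) X, L X -> L (c *: X)) &
      (forall X Y, L X -> L Y -> L (lie_bracket X Y))].

Definition in_lie_generated (R : ringType) (n : nat)
    (Gen : 'M[R]_n -> Prop) (M : 'M[R]_n) : Prop :=
  forall L : 'M[R]_n -> Prop, lie_subalgebra L -> (forall X, Gen X -> L X) -> L M.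

Definition weakly_connected n (e : rel 'I_n) (i j : 'I_n) : bool :=
  connect (fun x y => e x y || e y x) i j.

(* G_S : arc (i,j) iff E_ij \in S *)
Definition arcS n (S : {set 'I_n * 'I_n}) : rel 'I_n := fun i j => (i, j) \in S.

Definition arcA (R : ringType) n (A : 'M[R]_n) : rel 'I_n := fun i j => A i j != 0.

(* Main.v *)
Require Import Defs.
From HB Require Import structures.
From mathcomp Require Import all_boot all_order all_algebra.
From mathcomp Require Import reals.
Import GRing.Theory Num.Theory.
Local Open Scope ring_scope.

Lemma dX_E (R : realType) n (a b : 'I_n) (X : 'M[R]_n) i s :
  (delta_mx a b *m X) i s = (i == a)%:R * X b s.
Proof.
rewrite mxE (bigD1 b) //= big1 ?addr0 => [|t ntb]; rewrite !mxE.
  by rewrite eqxx andbT.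
by rewrite (negPf ntb) andbF mul0r.
Qed.

Lemma Xd_E (R : realType) n (c d : 'I_n) (X : 'M[R]_n) s j :
  (X *m delta_mx c d) s j = X s c * (j == d)%:R.
Proof.
rewrite mxE (bigD1 c) //= big1 ?addr0 => [|t ntc]; rewrite !mxE.
  by rewrite eqxx.
by rewrite (negPf ntc) mulr0.
Qed.

Lemma dXd (R : realType) n (a b c d : 'I_n) (X : 'M[R]_n) :
  delta_mx a b *m X *m delta_mx c d = X b c *: delta_mx a d.
Proof.
apply/matrixP => i j; rewrite Xd_E dX_E !mxE.
by case: (i == a); case: (j == d); rewrite /= ?mul1r ?mul0r ?mulr1 ?mulr0.
Qed.

Lemma first_step (T : finType) (r : rel T) x y :
  connect r x y -> y != x -> exists z, r x z && (z != x).
Proof.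
move/connectP=> [p]; elim: p x => [|z p IH] x /=.
  by move=> _ ->; rewrite eqxx.
case/andP=> rxz pz ly nyx; case: (eqVneq z x) => [ezx|nzx].
  by subst z; exact: IH pz ly nyx.
by exists z; rewrite rxz nzx.
Qed.

Lemma connect_rev (T : finType) (r : rel T) x y :
  connect r x y -> connect (fun a b => r b a) y x.
Proof.
move/connectP=> [p]; elim: p x => [|z p IH] x /=.
  by move=> _ ->; exact: connect0.
case/andP=> rxz pz ly.
exact: connect_trans (IH z pz ly) (connect1 (rxz : (fun a b => r b a) z x)).
Qed.

Lemma mask_lemma (R : realType) n (L : 'M[R]_n -> Prop) (E X : 'M[R]_n) :
  lie_subalgebra L -> L E -> E *m E = E -> L X -> L (E *m X - E *m X *m E).
Proof.
case=> L0 LD LZ LB LE EE LX.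
have H := LD _ _ (LB _ _ LE LX) (LB _ _ LE (LB _ _ LE LX)).
have -> : E *m X - E *m X *m E =
  2%:R^-1 *: (lie_bracket E X + lie_bracket E (lie_bracket E X)).
  rewrite /lie_bracket mulmxBr mulmxBl !mulmxA EE -[X *m E *m E]mulmxA EE.
  have -> : E *m X - X *m E + (E *m X - E *m X *m E - (E *m X *m E - X *m E))
     = 2%:R *: (E *m X - E *m X *m E).
    by rewrite scaler_nat mulr2n; rewrite !opprB !addrA; congr (_ + _);
       set a := E *m X; set b := X *m E; set c := a *m E;
       by rewrite addrAC [a - b + a]addrAC subrK addrAC.
  by rewrite scalerA mulVf ?scale1r // pnatr_eq0.
exact: LZ.
Qed.

Lemma row_lemma (R : realType) n (L : 'M[R]_n -> Prop) (k : 'I_n)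
    (A : 'M[R]_n) (e : rel 'I_n) :
  lie_subalgebra L -> L (delta_mx k k) -> L A ->
  (forall i j, e i j -> L (delta_mx i j)) ->
  (forall w, exists w', [/\ e w w', w' != w & connect e w' w]) ->
  (forall j, connect (fun x y => (A x y != 0) || e x y) k j) ->
  forall q, L (delta_mx k q).
Proof.
move=> HL Lkk LA He H1 H2.
have [L0 LD LZ LB] := HL.
have Lbr X Y : L X -> L Y -> L (X *m Y - Y *m X) := LB X Y.
have stepe q w : L (delta_mx k q) -> e q w -> L (delta_mx k w).
  move=> Lq eqw; case: (eqVneq w k) => [->//|nwk].
  by have := Lbr _ _ Lq (He _ _ eqw); rewrite mul_delta_mx mul_delta_mx_0 ?subr0.
have conne q w : L (delta_mx k q) -> connect e q w -> L (delta_mx k w).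
  move=> Lq /connectP [p]; elim: p q Lq => [|z p IH] q Lq /=; first by move=> _ ->.
  by case/andP=> eqz pz ly; exact: IH (stepe _ _ Lq eqz) pz ly.
have stepA q w : L (delta_mx k q) -> A q w != 0 -> L (delta_mx k w).
  move=> Lq Aqw; have [w' [eww' nw'w cw'w]] := H1 w.
  apply: (conne w') cw'w.
  case: (eqVneq w k) => [ewk|nwk]; first by subst w; exact: stepe _ _ Lkk eww'.
  case: (eqVneq w' k) => [->//|nw'k].
  case: (eqVneq w q) => [ewq|nwq]; first by subst w; exact: stepe _ _ Lq eww'.
  have nkw : k != w by rewrite eq_sym.
  have nqw : q != w by rewrite eq_sym.
  pose Z := delta_mx k q *m A - A *m delta_mx k q.
  have LZ' : L Z := Lbr _ _ Lq LA.
  have LY := @mask_lemma _ _ _ _ _ HL Lkk (mul_delta_mx _ _ _) LZ'.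
  have := Lbr _ _ LY (He _ _ eww').
  set Y := (X in L (X *m _ - _)).
  have -> : Y *m delta_mx w w' - delta_mx w w' *m Y = A q w *: delta_mx k w'.
    have h1 : delta_mx w w' *m Y = 0.
      by rewrite /Y mulmxBr !mulmxA mul_delta_mx_0 // !mul0mx subrr.
    have h2 : Y *m delta_mx w w' = delta_mx k k *m Z *m delta_mx w w'.
      by rewrite /Y mulmxBl -[_ *m delta_mx k k *m delta_mx w w']mulmxA mul_delta_mx_0 // mulmx0 subr0.
    rewrite h2 (h1 : delta_mx w w' *m Y = 0) subr0 /Z mulmxBr mulmxBl !mulmxA mul_delta_mx dXd.
    by rewrite -[_ *m delta_mx k q *m _]mulmxA mul_delta_mx_0 // mulmx0 subr0.
  move/(LZ (A q w)^-1); by rewrite scalerA mulVf // scale1r.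
move=> q; have [p pth lst] := connectP (H2 q).
suff: forall x, L (delta_mx k x) ->
  path (fun x y => (A x y != 0) || e x y) x p -> q = last x p -> L (delta_mx k q).
  by move=> /(_ k Lkk pth lst).
elim: p {pth lst} => [|z p IH] x Lx /=; first by move=> _ ->.
case/andP=> /orP [h|h] pz ly.
  exact: IH (stepA _ _ Lx h) pz ly.
exact: IH (stepe _ _ Lx h) pz ly.
Qed.

Lemma lie_transpose (R : realType) n (L : 'M[R]_n -> Prop) :
  lie_subalgebra L -> lie_subalgebra (fun X => L X^T).
Proof.
case=> L0 LD LZ LB; split.
- by rewrite trmx0.
- by move=> X Y LX LY; rewrite linearD; exact: LD.
- by move=> c X LX; rewrite linearZ; exact: LZ.
move=> X Y LX LY; rewrite /lie_bracket linearB /= !trmx_mul.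
have := LZ (-1) _ (LB _ _ LX LY); rewrite /lie_bracket scaleN1r opprB.
done.
Qed.

Arguments first_step {T r x y}.
Arguments connect_rev {T r x y}.
Arguments lie_transpose {R n L}.

Theorem lemma8 (R : realType) (n : nat) (S : {set 'I_n * 'I_n}) (A : 'M[R]_n) :
  (0 < n)%N ->
  (forall i j : 'I_n, weakly_connected (arcS S) i j ->
       connect (arcS S) i j) ->
  (forall i : 'I_n, exists j : 'I_n, j != i /\ weakly_connected (arcS S) i j) ->
  (exists i : 'I_n, (i, i) \in S) ->
  (forall i j : 'I_n, connect (fun x y => arcA A x y || arcS S x y) i j) ->
  forall M : 'M[R]_n,
    in_lie_generated
      (fun X => X = A \/ exists i j : 'I_n, (i, j) \in S /\ X = delta_mx i j) M.
Proof.
move=> _ Hi Hii [k Skk] Hiii M L HL HG.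
have [L0 LD LZ LB] := HL.
pose e := arcS S.
have He i j : e i j -> L (delta_mx i j).
  by move=> h; apply: HG; right; exists i, j.
have LA : L A by apply: HG; left.
have Lkk := He k k Skk.
have wsym i j : weakly_connected e i j -> weakly_connected e j i.
  by rewrite /weakly_connected (sym_connect_sym _) // => x y; apply: orbC.
have warc i j : e i j -> weakly_connected e i j.
  by move=> h; apply: connect1; rewrite h.
have H1 w : exists w', [/\ e w w', w' != w & connect e w' w].
  have [j [njw wj]] := Hii w.
  have [z /andP [ewz nzw]] := first_step (Hi _ _ wj) njw.
  by exists z; split => //; apply: Hi; apply: wsym; apply: warc.
have Row := @row_lemma _ _ L k A e HL Lkk LA He H1 (fun j => Hiii k j).
have HL' := lie_transpose HL.
have Lkk' : L (delta_mx k k)^T by rewrite trmx_delta.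
have LA' : L (A^T)^T by rewrite trmxK.
have He' i j : (fun x y => e y x) i j -> L (delta_mx i j)^T.
  by move=> h; rewrite trmx_delta; apply: He.
have H1' w : exists w', [/\ (fun x y => e y x) w w', w' != w &
                          connect (fun x y => e y x) w' w].
  have [j [njw wj]] := Hii w.
  have cjw : connect e j w := Hi _ _ (wsym _ _ wj).
  have [z /andP [ewz nzw]] := first_step (connect_rev cjw) njw.
  exists z; split => //; apply: connect_rev; apply: Hi.
  by apply: wsym; apply: warc.
have H2' j : connect (fun x y => (A^T x y != 0) || (fun x y => e y x) x y) k j.
  rewrite (eq_connect (e' := fun a b => (A b a != 0) || e b a)).
    exact: connect_rev (Hiii j k).
  by move=> x y; rewrite mxE.
have Col := @row_lemma _ _ (fun X => L X^T) k A^T (fun x y => e y x)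
   HL' Lkk' LA' He' H1' H2'.
have Col' q : L (delta_mx q k) by have := Col q; rewrite /= trmx_delta.
rewrite (matrix_sum_delta M).
apply: (big_ind L) => // i _; apply: (big_ind L) => // j _.
apply: LZ.
case: (eqVneq i j) => [<-|nij].
  have := LD _ _ (LB _ _ (Col' i) (Row i)) Lkk.
  by rewrite /lie_bracket !mul_delta_mx subrK.
have := LB _ _ (Col' i) (Row j).
by rewrite /lie_bracket mul_delta_mx mul_delta_mx_0 ?subr0 // eq_sym.
Qed.
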